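(* The following two group presentations are minimal, in the sense that no relator can be removed without changing the group; equivalently, no relator lies in the normal closure, in the free group on the generators, of the remaining relators: (1) $\langle y_2,y_3 \mid [\,c,\ (y_2^ny_3^m)^{-1}c\,(y_2^ny_3^m)\,],\ n,m\in\mathbb{Z},\ (n,m)>(0,0)\rangle$, where $c=[y_2,y_3]$; (2) $\langle x_1,x_2,x_3 \mid x_1^2,\ x_2^2,\ x_3^2,\ [\,v,\ h_{n,m}^{-1}v\,h_{n,m}\,],\ n,m\in\mathbb{Z},\ (n,m)>(0,0)\rangle$, where $v=[x_2x_1,x_1x_3]$ and $h_{n,m}=(x_2x_1)^n(x_1x_3)^m$.
   Context: Commutators are $[a,b]=aba^{-1}b^{-1}$. The order on pairs is lexicographic: $(n,m)>(0,0)$ means $n>0$, or $n=0$ and $m>0$. (These are presentations of the rotation subgroup and of the triangle group of a generic Euclidean triangle, respectively; the first presents the free metabelian group of rank 2.) *)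

(* Defs.v *)
(* Free groups on a generator type T are modelled by words
   (lists of letters (generator, inverted?)) up to free equivalence. *)
From mathcomp Require Import all_boot all_order all_algebra.
From Stdlib Require Import Relations.
Set Implicit Arguments. Unset Strict Implicit. Unset Printing Implicit Defensive.
Import Order.TTheory GRing.Theory Num.Theory.

Definition letter (T : Type) := (T * bool)%type. (* true = inverse letter *)
Definition word (T : Type) := seq (letter T).

Definition linv (T : Type) (a : letter T) : letter T := (a.1, ~~ a.2).
Definition winv (T : Type) (w : word T) : word T := rev (map (@linv T) w).
Definition gen (T : Type) (x : T) : word T := [:: (x, false)].

Inductive free_step (T : Type) : word T -> word T -> Prop :=
| FreeStep (u v : word T) (a : letter T) :
    free_step (u ++ [:: a; linv a] ++ v) (u ++ v).

Definition free_eq (T : Type) : relation (word T) :=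
  clos_refl_sym_trans (word T) (@free_step T).

Inductive in_nclosure (T : Type) (S : word T -> Prop) : word T -> Prop :=
| nc_one : in_nclosure S [::]
| nc_conj (r u w : word T) : S r -> in_nclosure S w ->
    in_nclosure S (u ++ r ++ winv u ++ w)
| nc_conjinv (r u w : word T) : S r -> in_nclosure S w ->
    in_nclosure S (u ++ winv r ++ winv u ++ w)
| nc_eq (w w' : word T) : free_eq w w' -> in_nclosure S w ->
    in_nclosure S w'.

Definition minimal_presentation (T I : Type) (r : I -> word T) : Prop :=
  forall i : I, ~ in_nclosure (fun w => exists j, j <> i /\ w = r j) (r i).

Definition wmul (T : Type) (u v : word T) : word T := u ++ v.
Definition wcomm (T : Type) (a b : word T) : word T :=
  a ++ b ++ winv a ++ winv b.
Definition wpow (T : Type) (u : word T) (n : int) : word T :=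
  match n with
  | Posz k => flatten (nseq k u)
  | Negz k => flatten (nseq k.+1 (winv u))
  end.
Definition wconj (T : Type) (c h : word T) : word T := winv h ++ c ++ h.

Definition lexpos (p : int * int) : bool :=
  ((0 < p.1)%R) || ((p.1 == 0) && (0 < p.2)%R).
Definition PosPair := {p : int * int | lexpos p}.

Definition y2 : word 'I_2 := gen ord0.
Definition y3 : word 'I_2 := gen (@Ordinal 2 1 isT).
Definition cY : word 'I_2 := wcomm y2 y3.
Definition rel1 (p : PosPair) : word 'I_2 :=
  let h := wpow y2 (sval p).1 ++ wpow y3 (sval p).2 in
  wcomm cY (wconj cY h).

Definition x1 : word 'I_3 := gen (@Ordinal 3 0 isT).
Definition x2 : word 'I_3 := gen (@Ordinal 3 1 isT).
Definition x3 : word 'I_3 := gen (@Ordinal 3 2 isT).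
Definition vX : word 'I_3 := wcomm (x2 ++ x1) (x1 ++ x3).
Definition hX (n m : int) : word 'I_3 :=
  wpow (x2 ++ x1) n ++ wpow (x1 ++ x3) m.
Definition rel2 (i : 'I_3 + PosPair) : word 'I_3 :=
  match i with
  | inl k => gen k ++ gen k
  | inr p => wcomm vX (wconj vX (hX (sval p).1 (sval p).2))
  end.

(* Main.v *)
Require Import Defs.
From mathcomp Require Import all_boot all_order all_algebra.
From mathcomp Require Import zify ring.
Set Implicit Arguments. Unset Strict Implicit. Unset Printing Implicit Defensive.
Import Order.TTheory GRing.Theory Num.Theory.
Local Open Scope ring_scope.
Definition pos := (int * int)%type.
Definition relu (x : int) : int := if 0 <= x then x else 0.
Section Grp.
Variable v1 v2 : int.
Definition F (d : int * int) : int :=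
  (if d.2 == v2 then - relu (d.1 - v1) else 0) +
  (if d.2 == - v2 then relu (- d.1 - v1) else 0).

Definition act (g : pos) (s : bool) (p : pos) : pos :=
  if s then (g.1 - p.1, g.2 - p.2 - 1) else (g.1 + p.1, g.2 + p.2).
Definition gmul (g : pos) (s : bool) (h : pos) : pos :=
  if s then (g.1 - h.1, g.2 - h.2) else (g.1 + h.1, g.2 + h.2).
Definition sgn (s : bool) : int := if s then -1 else 1.
Definition actL g s (L : seq (int * pos)) :=
  map (fun x => (sgn s * x.1, act g s x.2)) L.
Definition P (k : pos -> int) (L : seq (int * pos)) : int :=
  foldr (fun x acc => x.1 * k x.2 + acc) 0 L.
Definition Bf L M := P (fun p => P (fun q => F (q.1 - p.1, q.2 - p.2)) M) L.

Lemma F_opp a b : F (-a, -b) = - F (a, b).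
Proof.
rewrite /F /=.
have E1 : (- b == v2) = (b == - v2) by rewrite eqr_oppLR.
have E2 : (- b == - v2) = (b == v2) by rewrite eqr_opp.
rewrite E1 E2 opprK.
case: (b == v2); case: (b == - v2); rewrite /relu; repeat (case: ifP => ?); lia.
Qed.
Lemma relu_delta x : 2 * relu x - relu (x - 1) - relu (x + 1) =
  - (if x == 0 then 1 else 0).
Proof.
rewrite /relu; case: eqP => Hx; do 3 (case: ifP => ?); lia.
Qed.

Lemma F_key a b : 2 * F (a, b) - F (a - 1, b) - F (a + 1, b) =
  (if (a == v1) && (b == v2) then 1 else 0) -
  (if (a == - v1) && (b == - v2) then 1 else 0).
Proof.
rewrite /F /=.
have h1 := relu_delta (a - v1).
have h2 := relu_delta (- a - v1).
have e1 : a - 1 - v1 = a - v1 - 1 by lia.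
have e2 : a + 1 - v1 = a - v1 + 1 by lia.
have e3 : - (a - 1) - v1 = - a - v1 + 1 by lia.
have e4 : - (a + 1) - v1 = - a - v1 - 1 by lia.
rewrite e1 e2 e3 e4.
have q1 : (a - v1 == 0) = (a == v1) by rewrite subr_eq0.
have q2 : (- a - v1 == 0) = (a == - v1) by rewrite subr_eq0 eqr_oppLR.
rewrite q1 in h1; rewrite q2 in h2.
move: h1 h2.
set r0 := relu (a - v1). set r1 := relu (a - v1 - 1). set r2 := relu (a - v1 + 1).
set s0 := relu (- a - v1). set s1 := relu (- a - v1 - 1). set s2 := relu (- a - v1 + 1).
clearbody r0 r1 r2 s0 s1 s2.
(case: (b == v2); case: (b == - v2); rewrite /= ?andbF ?andbT;
case: (a == v1); case: (a == - v1); lia).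
Qed.

Lemma P_cat k L M : P k (L ++ M) = P k L + P k M.
Proof. by elim: L => [|x L IH] /=; rewrite ?add0r // IH addrA. Qed.
Lemma P_ext k k' L : (forall p, k p = k' p) -> P k L = P k' L.
Proof. by move=> H; elim: L => [|x L IH] //=; rewrite IH H. Qed.
Lemma P_scale c k L : P (fun p => c * k p) L = c * P k L.
Proof.
elim: L => [|x L IH] /=; first by rewrite mulr0.
by rewrite IH mulrDr mulrA (mulrC x.1 c) mulrA.
Qed.
Lemma P_opp k L : P (fun p => - k p) L = - P k L.
Proof.
rewrite -mulN1r -(P_scale (-1)); apply: P_ext => p; by rewrite mulN1r.
Qed.
Lemma P_add k k' L : P (fun p => k p + k' p) L = P k L + P k' L.
Proof.
elim: L => [|x L IH] /=; first by rewrite addr0.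
rewrite IH mulrDr; set a := x.1 * k x.2; set b := x.1 * k' x.2.
set c := P k L; set d := P k' L. lia.
Qed.
Lemma P_zero L : P (fun _ => 0) L = 0.
Proof. by elim: L => [|x L IH] //=; rewrite IH mulr0 addr0. Qed.
Lemma P_actL k g s L : P k (actL g s L) = sgn s * P (fun p => k (act g s p)) L.
Proof.
elim: L => [|x L IH] /=; first by rewrite mulr0.
by rewrite IH mulrDr mulrA.
Qed.

Lemma Bf_catl L L' M : Bf (L ++ L') M = Bf L M + Bf L' M.
Proof. exact: P_cat. Qed.
Lemma Bf_catr L M M' : Bf L (M ++ M') = Bf L M + Bf L M'.
Proof.
rewrite /Bf -P_add; apply: P_ext => p; exact: P_cat.
Qed.
Lemma Bf_eql L L' M : (forall k, P k L = P k L') -> Bf L M = Bf L' M.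
Proof. by move=> H; rewrite /Bf H. Qed.
Lemma Bf_eqr L M M' : (forall k, P k M = P k M') -> Bf L M = Bf L M'.
Proof. by move=> H; rewrite /Bf; apply: P_ext => p; rewrite H. Qed.
Lemma Bf_oppl L L' M : (forall k, P k L' = - P k L) -> Bf L' M = - Bf L M.
Proof. by move=> H; rewrite /Bf H. Qed.
Lemma Bf_oppr L M M' : (forall k, P k M' = - P k M) -> Bf L M' = - Bf L M.
Proof.
move=> H; rewrite /Bf -P_opp; apply: P_ext => p; by rewrite H.
Qed.
Lemma Bf_nil_r L : Bf L [::] = 0.
Proof. by rewrite /Bf; apply: P_zero. Qed.

Lemma F_act g s p q :
  F ((act g s q).1 - (act g s p).1, (act g s q).2 - (act g s p).2) =
  sgn s * F (q.1 - p.1, q.2 - p.2).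
Proof.
case: g p q => [g1 g2] [p1 p2] [q1 q2]; case: s => /=.
  rewrite mulN1r -F_opp; congr F; congr pair; lia.
rewrite mul1r; congr F; congr pair; lia.
Qed.

Lemma sgn3 s : sgn s * (sgn s * sgn s) = sgn s.
Proof. by case: s; rewrite /sgn ?mulr1 ?mulrNN ?mulr1. Qed.

Lemma Bf_act g s L M : Bf (actL g s L) (actL g s M) = sgn s * Bf L M.
Proof.
rewrite /Bf P_actL.
rewrite (@P_ext _ (fun p => sgn s * (sgn s * P (fun q => F (q.1 - p.1, q.2 - p.2)) M))); last first.
  move=> p /=; rewrite P_actL; congr (_ * _).
  rewrite -P_scale; apply: P_ext => q /=; by rewrite F_act.
by rewrite !P_scale !mulrA -(mulrA (sgn s)) sgn3.
Qed.

Lemma actL_cat g s L M : actL g s (L ++ M) = actL g s L ++ actL g s M.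
Proof. exact: map_cat. Qed.
Lemma actL_comp g s g' s' L :
  actL g s (actL g' s' L) = actL (gmul g s g') (s (+) s') L.
Proof.
rewrite /actL -map_comp; apply: eq_map => [[c [p1 p2]]] /=.
case: g g' => [g1 g2] [h1 h2]; case: s; case: s'; rewrite /sgn /=;
  congr (_, (_, _)); lia.
Qed.
Lemma actL_id L : actL (0, 0) false L = L.
Proof.
elim: L => [|[c [p1 p2]] L IH] //=; rewrite IH /sgn mul1r !add0r //.
Qed.

Record G := mkG { gL : seq (int * pos); ga : int; gg : pos; gs : bool }.
Definition one := mkG [::] 0 (0, 0) false.
Definition mul (x y : G) : G :=
  mkG (gL x ++ actL (gg x) (gs x) (gL y))
      (ga x + sgn (gs x) * ga y + Bf (gL x) (actL (gg x) (gs x) (gL y)))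
      (gmul (gg x) (gs x) (gg y)) (gs x (+) gs y).

Lemma sgn_addb s s' : sgn (s (+) s') = sgn s * sgn s'.
Proof. by case: s; case: s'; rewrite /sgn /= ?mulrNN ?mulr1 ?mul1r. Qed.

Lemma mulA x y z : mul (mul x y) z = mul x (mul y z).
Proof.
case: x => Lx ax gx sx; case: y => Ly ay gy sy; case: z => Lz az gz sz.
rewrite /mul /=; congr mkG.
- by rewrite actL_cat actL_comp catA.
- rewrite Bf_catl actL_cat Bf_catr !actL_comp -(actL_comp gx sx gy sy Lz) Bf_act sgn_addb.
  set b1 := Bf Lx (actL gx sx Ly). set b2 := Bf Ly (actL gy sy Lz).
  set b3 := Bf Lx _. clearbody b1 b2 b3.
  case: sx; case: sy; rewrite /sgn; lia.
- case: gx gy gz => [g1 g2] [h1 h2] [k1 k2]; case: sx; case: sy; rewrite /=;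
  congr pair; lia.
- by rewrite addbA.
Qed.

Lemma mul1g x : mul one x = x.
Proof.
case: x => L a g s; rewrite /mul /= actL_id /Bf /= mul1r add0r addr0.
by case: g => g1 g2; rewrite /= !add0r.
Qed.
Lemma mulg1 x : mul x one = x.
Proof.
case: x => L a g s; rewrite /mul /= cats0 mulr0 addr0 Bf_nil_r addr0 addbF.
by case: g s => g1 g2 [] /=; rewrite ?subr0 ?addr0.
Qed.

Definition geq (x y : G) :=
  (forall k, P k (gL x) = P k (gL y)) /\ ga x = ga y /\ gg x = gg y /\ gs x = gs y.

Lemma geq_refl x : geq x x.
Proof. by []. Qed.
Lemma geq_sym x y : geq x y -> geq y x.
Proof. by case=> [H1 [H2 [H3 H4]]]; split=> [k|]; rewrite ?H1 ?H2 ?H3 ?H4. Qed.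
Lemma geq_trans x y z : geq x y -> geq y z -> geq x z.
Proof.
case=> [H1 [H2 [H3 H4]]] [K1 [K2 [K3 K4]]]; split=> [k|].
  by rewrite H1 K1.
by rewrite H2 K2 H3 K3 H4 K4.
Qed.
Lemma geq_mull x y y' : geq y y' -> geq (mul x y) (mul x y').
Proof.
case=> [H1 [H2 [H3 H4]]]; rewrite /mul; split=> [k|] /=.
  by rewrite !P_cat !P_actL H1.
rewrite H2 H3 H4; split=> //; congr (_ + _); apply: Bf_eqr => k.
by rewrite !P_actL H1.
Qed.
Lemma geq_mulr x x' y : geq x x' -> geq (mul x y) (mul x' y).
Proof.
case: x x' => L a g s [L' a' g' s'] [/= H1 [H2 [H3 H4]]]; subst.
rewrite /mul; split=> [k|] /=.
  by rewrite !P_cat H1.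
split=> //; congr (_ + _); apply: Bf_eql => k; exact: H1.
Qed.

Section Phi.
Variable T : Type.
Variable img : letter T -> G.
Hypothesis Hinv : forall a, geq (mul (img a) (img (linv a))) one.

Definition Phi (w : word T) : G := foldr (fun a acc => mul (img a) acc) one w.

Lemma Phi_cat u w : Phi (u ++ w) = mul (Phi u) (Phi w).
Proof.
elim: u => [|a u IH] /=; first by rewrite mul1g.
by rewrite IH mulA.
Qed.

Lemma linvK (a : letter T) : linv (linv a) = a.
Proof. by case: a => x b; rewrite /linv /= negbK. Qed.

Lemma winvK (u : word T) : winv (winv u) = u.
Proof.
rewrite /winv map_rev revK -map_comp.
by rewrite (eq_map (g := id)) ?map_id // => a /=; rewrite linvK.
Qed.

Lemma winv_cons a (u : word T) : winv (a :: u) = winv u ++ [:: linv a].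
Proof. by rewrite /winv /= rev_cons -cats1. Qed.

Lemma Phi_winv_r u : geq (mul (Phi u) (Phi (winv u))) one.
Proof.
elim: u => [|a u IH] /=; first by rewrite mul1g.
rewrite winv_cons Phi_cat /= mulg1 mulA.
apply: (geq_trans _ (Hinv a)); apply: geq_mull.
rewrite -mulA; apply: geq_trans (geq_mulr _ IH) _; rewrite mul1g; exact: geq_refl.
Qed.

Lemma Phi_winv_l u : geq (mul (Phi (winv u)) (Phi u)) one.
Proof. by have := Phi_winv_r (winv u); rewrite winvK. Qed.

Lemma Phi_step w w' : free_step w w' -> geq (Phi w) (Phi w').
Proof.
case=> u w0 a; rewrite !Phi_cat; apply: geq_mull.
have -> : Phi [:: a; linv a] = mul (img a) (img (linv a)) by rewrite /= mulg1.
apply: geq_trans (geq_mulr _ (Hinv a)) _; rewrite mul1g; exact: geq_refl.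
Qed.

Lemma Phi_free w w' : free_eq w w' -> geq (Phi w) (Phi w').
Proof.
elim=> [x y /Phi_step //|x|x y _ IH|x y z _ IH1 _ IH2].
- exact: geq_refl.
- exact: geq_sym.
- exact: geq_trans IH1 IH2.
Qed.

Lemma Phi_ncl (S : word T -> Prop) w :
  (forall r, S r -> geq (Phi r) one) -> in_nclosure S w -> geq (Phi w) one.
Proof.
move=> HS; elim=> {w} [|r u w Sr _ IH|r u w Sr _ IH|w w' Hf _ IH].
- exact: geq_refl.
- rewrite !Phi_cat.
  apply: geq_trans (geq_mull _ (geq_mulr _ (HS r Sr))) _.
  rewrite mul1g -mulA.
  apply: geq_trans (geq_mulr _ (Phi_winv_r u)) _.
  rewrite mul1g; exact: IH.
- rewrite !Phi_cat.
  have H1 : geq (Phi (winv r)) one.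
    apply: (geq_trans _ (Phi_winv_r r)).
    rewrite -[X in geq X _]mul1g.
    apply: geq_mulr; exact: geq_sym (HS r Sr).
  apply: geq_trans (geq_mull _ (geq_mulr _ H1)) _.
  rewrite mul1g -mulA.
  apply: geq_trans (geq_mulr _ (Phi_winv_r u)) _.
  rewrite mul1g; exact: IH.
- apply: geq_trans IH; exact: geq_sym (Phi_free Hf).
Qed.

Lemma not_ncl (I : Type) (r : I -> word T) (i : I) :
  (forall j, j <> i -> geq (Phi (r j)) one) -> ~ geq (Phi (r i)) one ->
  ~ in_nclosure (fun w => exists j, j <> i /\ w = r j) (r i).
Proof.
move=> Hj Hi H; apply: Hi; apply: Phi_ncl H => w [j [ji ->]]; exact: Hj.
Qed.

Definition pure (x : G) := gg x = (0, 0) /\ gs x = false.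

Lemma inv_info x' x : geq (mul x' x) one ->
  [/\ gs x' = gs x, gmul (gg x') (gs x') (gg x) = (0, 0),
      forall k, P k (gL x') = - P k (actL (gg x') (gs x') (gL x)) &
      ga x' + sgn (gs x') * ga x + Bf (gL x') (actL (gg x') (gs x') (gL x)) = 0].
Proof.
case: x' x => L' a' g' s' [L a g s] [/= H1 [H2 [H3 H4]]]; split=> //.
- by move: H4; clear; case: s'; case: s.
- move=> k; have := H1 k; rewrite P_cat /= => E; lia.
Qed.

Lemma inv_pure x' x : geq (mul x' x) one -> pure x ->
  [/\ pure x', forall k, P k (gL x') = - P k (gL x) &
      ga x' + ga x + Bf (gL x') (gL x) = 0].
Proof.
move=> /inv_info [E1 E2 E3 E4] [Px1 Px2].
have Hs : gs x' = false by rewrite E1.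
rewrite Px1 Hs in E2; rewrite Hs in E3 E4.
have Hg : gg x' = (0, 0).
  case: (gg x') E2 => g1 g2 /= [? ?]; congr pair; lia.
rewrite Hg actL_id /sgn mul1r in E3 E4.
by split.
Qed.

Lemma mul_pure x y : pure x ->
  mul x y = mkG (gL x ++ gL y) (ga x + ga y + Bf (gL x) (gL y)) (gg y) (gs y).
Proof.
case: x => L a g s [/= -> ->]; rewrite /mul /= actL_id /sgn mul1r.
by case: (gg y) => g1 g2 /=; rewrite !add0r.
Qed.

Lemma comm_val u w : pure (Phi u) -> pure (Phi w) ->
  geq (Phi (wcomm u w))
      (mkG [::] (Bf (gL (Phi u)) (gL (Phi w)) - Bf (gL (Phi w)) (gL (Phi u))) (0, 0) false).
Proof.
move=> Pu Pw; rewrite /wcomm !Phi_cat.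
have [Pu' Nu Au] := inv_pure (Phi_winv_l u) Pu.
have [Pw' Nw Aw] := inv_pure (Phi_winv_l w) Pw.
rewrite (mul_pure _ Pu') (mul_pure _ Pw) (mul_pure _ Pu).
move: Au Aw Nu Nw; set x := Phi u; set y := Phi w; set x' := Phi (winv u);
  set y' := Phi (winv w) => Au Aw Nu Nw.
split=> [k|] /=.
  by rewrite !P_cat Nu Nw /=; lia.
split; last by case: Pw'.
rewrite !Bf_catr ?(Bf_oppl _ Nu) ?(Bf_oppl _ Nw) ?(Bf_oppr _ Nu) ?(Bf_oppr _ Nw).
rewrite (Bf_oppl _ Nu) (Bf_oppl _ Nw) in Au Aw.
lia.
Qed.

Lemma conj_val c h : pure (Phi c) ->
  pure (Phi (wconj c h)) /\
  forall k, P k (gL (Phi (wconj c h))) =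
            P k (actL (gg (Phi (winv h))) (gs (Phi (winv h))) (gL (Phi c))).
Proof.
move=> Pc; rewrite /wconj !Phi_cat (mul_pure _ Pc).
have [E1 E2 E3 _] := inv_info (Phi_winv_l h).
split.
  split; rewrite /mul /=; first by [].
  by rewrite E1; case: (gs (Phi h)).
move=> k; rewrite /mul /= P_cat actL_cat P_cat E3; lia.
Qed.

Lemma Phi_nseq u k t : gs (Phi u) = false -> gg (Phi u) = t ->
  gs (Phi (flatten (nseq k u))) = false /\
  gg (Phi (flatten (nseq k u))) = (k%:Z * t.1, k%:Z * t.2).
Proof.
move=> Hs Hg; elim: k => [|k [IH1 IH2]] /=; first by rewrite !mul0r.
rewrite Phi_cat /mul /= Hs IH1 IH2 Hg; split=> //=; congr pair; lia.
Qed.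

Lemma Phi_pow u n t : gs (Phi u) = false -> gg (Phi u) = t ->
  gs (Phi (wpow u n)) = false /\ gg (Phi (wpow u n)) = (n * t.1, n * t.2).
Proof.
move=> Hs Hg; case: n => k /=; first exact: Phi_nseq.
have [E1 E2 _ _] := inv_info (Phi_winv_l u).
rewrite Hs in E1; rewrite E1 Hg in E2.
have Hw : gg (Phi (winv u)) = (- t.1, - t.2).
  case: (gg (Phi (winv u))) E2 => g1 g2 /= [? ?]; congr pair; lia.
have [H1 H2] := Phi_nseq k.+1 E1 Hw.
split=> //; rewrite H2 NegzE; congr pair; by rewrite /= mulrN mulNr.
Qed.

Definition Xs : seq (int * pos) := [:: (1, (1, 0)); (-1, (0, 0))].
Definition Ys n m : seq (int * pos) := [:: (1, (1 - n, - m)); (-1, (- n, - m))].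

Lemma comm_ab a b :
  gs (Phi a) = false -> gg (Phi a) = (1, 0) -> (forall k, P k (gL (Phi a)) = 0) ->
  gs (Phi b) = false -> gg (Phi b) = (0, 1) -> (forall k, P k (gL (Phi b)) = k (0, 0)) ->
  pure (Phi (wcomm a b)) /\ forall k, P k (gL (Phi (wcomm a b))) = P k Xs.
Proof.
move=> sa ga La sb gb Lb.
have [A1 A2 A3 _] := inv_info (Phi_winv_l a).
have [B1 B2 B3 _] := inv_info (Phi_winv_l b).
rewrite sa in A1; rewrite sb in B1; rewrite A1 ga in A2; rewrite B1 gb in B2.
have gA : gg (Phi (winv a)) = (-1, 0).
  case: (gg (Phi (winv a))) A2 => g1 g2 /= [? ?]; congr pair; lia.
have gB : gg (Phi (winv b)) = (0, -1).
  case: (gg (Phi (winv b))) B2 => g1 g2 /= [? ?]; congr pair; lia.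
rewrite /wcomm !Phi_cat.
split.
  by rewrite /pure /mul /= ?sa ?sb ?A1 ?B1 ?ga ?gb ?gA ?gB /=.
move=> k; rewrite /mul /= ?sa ?sb ?A1 ?B1 ?ga ?gb ?gA ?gB /=.
repeat (rewrite P_cat || rewrite P_actL). rewrite A3 B3 !P_actL La Lb. rewrite ?A1 ?B1 ?gA ?gB ?La ?Lb ?sa ?sb /=.
rewrite (_ : (1 + 0, 0 + 0) = (1, 0)) // (_ : (1 + (0 + (-1 + (0 + 0))), 0 + (1 + (0 + (-1 + 0)))) = (0, 0)) //.
set A := k (1, 0); set B := k (0, 0); lia.
Qed.


Lemma rel_val a b n m :
  gs (Phi a) = false -> gg (Phi a) = (1, 0) -> (forall k, P k (gL (Phi a)) = 0) ->
  gs (Phi b) = false -> gg (Phi b) = (0, 1) -> (forall k, P k (gL (Phi b)) = k (0, 0)) ->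
  geq (Phi (wcomm (wcomm a b) (wconj (wcomm a b) (wpow a n ++ wpow b m))))
      (mkG [::] (Bf Xs (Ys n m) - Bf (Ys n m) Xs) (0, 0) false).
Proof.
move=> sa ga La sb gb Lb.
have [Pc Lc] := comm_ab sa ga La sb gb Lb.
set c := wcomm a b; set h := wpow a n ++ wpow b m.
have [Pz Lz] := conj_val h Pc.
have [s1 g1] := Phi_pow n sa ga.
have [s2 g2] := Phi_pow m sb gb.
have sh : gs (Phi h) = false by rewrite /h Phi_cat /mul /= s1 s2.
have gh : gg (Phi h) = (n, m).
  rewrite /h Phi_cat /mul /= s1 g1 g2 /=; congr pair; lia.
have [E1 E2 _ _] := inv_info (Phi_winv_l h).
rewrite sh in E1; rewrite E1 gh in E2.
have gw : gg (Phi (winv h)) = (- n, - m).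
  case: (gg (Phi (winv h))) E2 => x1 x2 /= [? ?]; congr pair; lia.
have LY : forall k, P k (gL (Phi (wconj c h))) = P k (Ys n m).
  move=> k; rewrite Lz gw E1 P_actL Lc /=.
  rewrite (_ : (- n + 1, - m + 0) = (1 - n, - m)); last by congr pair; lia.
  rewrite (_ : (- n + 0, - m + 0) = (- n, - m)); last by congr pair; lia.
  set A := k (1 - n, - m); set B := k (- n, - m); lia.
apply: geq_trans (comm_val Pc Pz) _.
split=> //=; split=> //.
by rewrite (Bf_eql _ Lc) (Bf_eqr _ Lc) (Bf_eql _ LY) (Bf_eqr _ LY).
Qed.

End Phi.

Lemma omega_val n m : Bf Xs (Ys n m) - Bf (Ys n m) Xs =
  (2 * F (- n, - m) - F (- n - 1, - m) - F (- n + 1, - m)) -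
  (2 * F (n, m) - F (n - 1, m) - F (n + 1, m)).
Proof.
rewrite /Bf /Xs /Ys /=.
have FE : forall x y x' y', x = x' -> y = y' -> F (x, y) = F (x', y')
  by move=> ? ? ? ? -> ->.
rewrite (FE (1 - n - 1) (- m - 0) (- n) (- m)); [|lia|lia].
rewrite (FE (- n - 1) (- m - 0) (- n - 1) (- m)); [|lia|lia].
rewrite (FE (1 - n - 0) (- m - 0) (- n + 1) (- m)); [|lia|lia].
rewrite (FE (- n - 0) (- m - 0) (- n) (- m)); [|lia|lia].
rewrite (FE (1 - (1 - n)) (0 - - m) n m); [|lia|lia].
rewrite (FE (0 - (1 - n)) (0 - - m) (n - 1) m); [|lia|lia].
rewrite (FE (1 - - n) (0 - - m) (n + 1) m); [|lia|lia].
rewrite (FE (0 - - n) (0 - - m) n m); [|lia|lia].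
set a1 := F (- n, - m); set a2 := F (- n - 1, - m); set a3 := F (- n + 1, - m).
set b1 := F (n, m); set b2 := F (n - 1, m); set b3 := F (n + 1, m).
lia.
Qed.
Lemma omega_lex n m : lexpos (n, m) -> lexpos (v1, v2) ->
  Bf Xs (Ys n m) - Bf (Ys n m) Xs = if (n == v1) && (m == v2) then -2 else 0.
Proof.
rewrite omega_val !F_key !eqr_opp.
have e1 : (- n == v1) = (n == - v1) by rewrite eqr_oppLR.
have e2 : (- m == v2) = (m == - v2) by rewrite eqr_oppLR.
rewrite e1 e2 /lexpos /=.
move=> /orP [Hn|/andP [/eqP Hn Hm]] /orP [Hv|/andP [/eqP Hv Hw]];
case: (n =P v1) => ?; case: (m =P v2) => ?; case: (n =P - v1) => ?; case: (m =P - v2) => ? /=; lia.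
Qed.
End Grp.

Lemma F00 v1 v2 : F v1 v2 (0, 0) = 0.
Proof. have := F_opp v1 v2 0 0; rewrite oppr0; set x := F _ _ _; lia. Qed.

Definition img1 (a : letter 'I_2) : G :=
  if nat_of_ord a.1 == 0%N then
    (if a.2 then mkG [::] 0 (-1, 0) false else mkG [::] 0 (1, 0) false)
  else (if a.2 then mkG [:: (-1, (0, -1))] 0 (0, -1) false
        else mkG [:: (1, (0, 0))] 0 (0, 1) false).

Ltac normk := repeat match goal with |- context [?k (?x, ?y)] =>
   let x' := eval vm_compute in x in let y' := eval vm_compute in y in
   progress rewrite (_ : (x, y) = (x', y')); [|reflexivity] end.

Ltac gsolve := repeat split; normk; try reflexivity; lia.

Lemma Hinv1 v1 v2 a : geq (mul v1 v2 (img1 a) (img1 (linv a))) one.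
Proof.
case: a => [[[|i] Hi] [|]]; rewrite /img1 /linv /mul /=; split=> //= [k|];
  rewrite /Bf /= ?F00; gsolve.
Qed.

Definition img2 (a : letter 'I_3) : G :=
  match nat_of_ord a.1 with
  | 0%N => mkG [::] 0 (0, 0) true
  | 1%N => mkG [::] 0 (1, 0) true
  | _ => mkG [:: (-1, (0, -1))] 0 (0, -1) true
  end.

Lemma Hinv2 v1 v2 a : geq (mul v1 v2 (img2 a) (img2 (linv a))) one.
Proof.
case: a => [[[|[|i]] Hi] b]; rewrite /img2 /linv /mul /=; split=> //= [k|];
  rewrite /Bf /= ?F00; gsolve.
Qed.

Lemma facts1 v1 v2 :
  let Ph := Phi v1 v2 img1 in
  (gs (Ph y2) = false /\ gg (Ph y2) = (1, 0) /\ (forall k, P k (gL (Ph y2)) = 0)) /\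
  (gs (Ph y3) = false /\ gg (Ph y3) = (0, 1) /\ (forall k, P k (gL (Ph y3)) = k (0, 0))).
Proof.
rewrite /= /y2 /y3 /gen /Phi /= ?mulg1 /img1 /=; do !split; try move=> k; gsolve.
Qed.

Lemma facts2 v1 v2 :
  let Ph := Phi v1 v2 img2 in
  (gs (Ph (x2 ++ x1)) = false /\ gg (Ph (x2 ++ x1)) = (1, 0) /\
      (forall k, P k (gL (Ph (x2 ++ x1))) = 0)) /\
  (gs (Ph (x1 ++ x3)) = false /\ gg (Ph (x1 ++ x3)) = (0, 1) /\
      (forall k, P k (gL (Ph (x1 ++ x3))) = k (0, 0))).
Proof.
rewrite /= /x1 /x2 /x3 /gen /Phi /= ?mulg1 /img2 /mul /=; do !split; try move=> k; gsolve.
Qed.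

Section Cnt.
Variable k : 'I_3.
Definition cnt (w : word 'I_3) : int :=
  foldr (fun a acc => (if a.1 == k then (if a.2 then -1 else 1) else 0) + acc) 0 w.

Lemma cnt_cat u w : cnt (u ++ w) = cnt u + cnt w.
Proof. elim: u => [|a u IH] /=; first by rewrite add0r. rewrite IH; lia. Qed.

Lemma cnt_winv u : cnt (winv u) = - cnt u.
Proof.
elim: u => [|a u IH]; first by [].
rewrite winv_cons cnt_cat IH /= /linv /=.
case: (a.1 == k); case: a.2 => /=; lia.
Qed.

Lemma cnt_free w w' : free_eq w w' -> cnt w = cnt w'.
Proof.
elim=> [x y []|x|x y _ IH|x y z _ IH1 _ IH2] //.
- move=> u w0 a; rewrite !cnt_cat /= /linv /=.
  case: (a.1 == k); case: a.2 => /=; lia.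
- by rewrite IH1.
Qed.

Lemma cnt_ncl (S : word 'I_3 -> Prop) w :
  (forall r, S r -> cnt r = 0) -> in_nclosure S w -> cnt w = 0.
Proof.
move=> HS; elim=> {w} [|r u w Sr _ IH|r u w Sr _ IH|w w' Hf _ IH] //.
- rewrite !cnt_cat cnt_winv (HS r Sr) IH; lia.
- rewrite !cnt_cat !cnt_winv (HS r Sr) IH; lia.
- by rewrite -(cnt_free Hf).
Qed.
End Cnt.

Lemma geq_one_iff (x : G) w :
  geq x (mkG [::] w (0, 0) false) -> (geq x one <-> w = 0).
Proof.
move=> H; split.
  move=> H1; have [_ [E _]] := geq_trans (geq_sym H) H1; exact: E.
move=> E; subst w; exact: H.
Qed.

Theorem theorem5p4 : minimal_presentation rel1 /\ minimal_presentation rel2.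
Proof.
split.
- move=> i.
  case: i => [[v1 v2] Hv].
  have [[sa [ga La]] [sb [gb Lb]]] := facts1 v1 v2.
  apply: (not_ncl (Hinv1 v1 v2)).
  + move=> [[n m] Hj] Hji.
    have H := rel_val (Hinv1 v1 v2) n m sa ga La sb gb Lb.
    rewrite omega_lex // in H.
    apply/(geq_one_iff H).
    case: (n =P v1) => [E1|] //=; case: (m =P v2) => [E2|] //=.
    subst; exfalso; apply: Hji; congr exist; exact: eq_irrelevance.
  + have H := rel_val (Hinv1 v1 v2) v1 v2 sa ga La sb gb Lb.
    rewrite omega_lex // !eqxx /= in H.
    by move/(geq_one_iff H).
- move=> [k|[[v1 v2] Hv]].
  + move=> H.
    have := cnt_ncl (k := k) _ H.
    rewrite /= eqxx /=.
    move=> Hc; suff : (1 + (1 + 0) : int) = 0 by [].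
    apply: Hc => r [[j|p] [Hj ->]]; rewrite /rel2; last first.
      rewrite /wcomm /wconj /hX.
      repeat (rewrite cnt_cat || rewrite cnt_winv).
      set a1 := cnt k x1; set a2 := cnt k x2; set a3 := cnt k x3.
      set a4 := cnt k (wpow _ _); set a5 := cnt k (wpow _ _); lia.
    rewrite /=.
      have Hjk : (j == k) = false by apply/eqP => E; apply: Hj; rewrite E.
      by rewrite Hjk.
  + have [[sa [ga La]] [sb [gb Lb]]] := facts2 v1 v2.
    apply: (not_ncl (Hinv2 v1 v2)).
    * move=> [j|[[n m] Hj]] Hji.
        rewrite /rel2 /Phi /= mulg1.
        have := Hinv2 v1 v2 (gen j)`_0.
        by [].
      have H := rel_val (Hinv2 v1 v2) n m sa ga La sb gb Lb.
      rewrite omega_lex // in H.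
      apply/(geq_one_iff H).
      case: (n =P v1) => [E1|] //=; case: (m =P v2) => [E2|] //=.
      subst; exfalso; apply: Hji; congr inr; congr exist; exact: eq_irrelevance.
    * have H := rel_val (Hinv2 v1 v2) v1 v2 sa ga La sb gb Lb.
      rewrite omega_lex // !eqxx /= in H.
      by move/(geq_one_iff H).
Qed.
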